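(* Let $n\ge 2$ and let $\Delta^c(Q_{4n})$ be the conjugacy super commuting graph of the generalized quaternion group $Q_{4n}$. (i) If $n$ is odd, the Sombor spectrum of $\Delta^c(Q_{4n})$ consists of $-(4n-1)\sqrt2$ with multiplicity $1$, $-(2n-1)\sqrt2$ with multiplicity $2n-3$, $-(2n+1)\sqrt2$ with multiplicity $2n-1$, and the three roots (with multiplicity) of \[\big(x-(4n-1)\sqrt2\big)\big(x-(2n-1)(2n-3)\sqrt2\big)\big(x-(2n-1)(2n+1)\sqrt2\big)-8(n-1)(10n^2-6n+1)\big(x-(2n-1)(2n+1)\sqrt2\big)-8n(10n^2-2n+1)\big(x-(2n-1)(2n-3)\sqrt2\big).\] (ii) If $n$ is even, the Sombor spectrum of $\Delta^c(Q_{4n})$ consists of $-(4n-1)\sqrt2$ with multiplicity $1$, $-(2n-1)\sqrt2$ with multiplicity $2n-3$, $-(n+1)\sqrt2$ with multiplicity $2n-2$, and the four roots (with multiplicity) of \[\big(x-(4n-1)\sqrt2\big)\big(x-(n-1)(n+1)\sqrt2\big)^2\big(x-(2n-1)(2n-3)\sqrt2\big)-8(n-1)(10n^2-6n+1)\big(x-(n-1)(n+1)\sqrt2\big)^2-4n(17n^2-6n+2)\big(x-(2n-3)(2n-1)\sqrt2\big)\big(x-(n-1)(n+1)\sqrt2\big).\]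
   Context: For a finite simple graph $\Gamma$ with vertices $u_1,\dots,u_N$, the Sombor matrix $S(\Gamma)$ has $(i,j)$ entry $\sqrt{\deg(u_i)^2+\deg(u_j)^2}$ if $u_i,u_j$ are adjacent and $0$ otherwise; the Sombor spectrum is the multiset of its eigenvalues. $Q_{4n}=\langle a,b: a^{2n}=e,\ a^n=b^2,\ ba=a^{-1}b\rangle$. The conjugacy super commuting graph $\Delta^c(G)$ has vertex set $G$, and distinct $g,h$ are adjacent iff $g,h$ are conjugate in $G$ or there exist distinct $g'$ conjugate to $g$ and $h'$ conjugate to $h$ with $g'h'=h'g'$. *)

(* Defs.v *)
From mathcomp Require Import all_boot all_order all_algebra.
Set Implicit Arguments. Unset Strict Implicit. Unset Printing Implicit Defensive.
Import Order.TTheory GRing.Theory Num.Theory.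

(* Concrete model of Q_{4n}: the element a^i b^j (0 <= i < 2n, j in {0,1})
   is encoded as the pair (i, j). *)
Definition Qelt (n : nat) : finType := ('I_(n.*2) * bool)%type.

Lemma ord_pos (m : nat) (i : 'I_m) : 0 < m.
Proof. by case: i => k; case: m. Qed.

(* a^i b^j * a^k b^l = a^(i + (-1)^j k + [j && l] n) b^(j + l),
   using b a^k = a^(-k) b and b^2 = a^n. *)
Definition qmul (n : nat) (x y : Qelt n) : Qelt n :=
  let: (i, j) := x in let: (k, l) := y in
  (@Ordinal (n.*2)
     ((i + (if j then n.*2 - k else k) + (if j && l then n else 0)) %% n.*2)
     (ltn_pmod _ (ord_pos i)),
   xorb j l).

Definition qconj (n : nat) (g h : Qelt n) : bool :=
  [exists x : Qelt n, qmul g x == qmul x h].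

Definition dcadj (n : nat) (g h : Qelt n) : bool :=
  (g != h) &&
  (qconj g h ||
   [exists g' : Qelt n, exists h' : Qelt n,
      [&& qconj g g', qconj h h', g' != h' & qmul g' h' == qmul h' g']]).

Definition dcdeg (n : nat) (g : Qelt n) : nat := #|[set h | dcadj g h]|.

Local Open Scope ring_scope.
Definition sombor_mx (R : rcfType) (n : nat) : 'M[R]_#|Qelt n| :=
  \matrix_(i < #|Qelt n|, j < #|Qelt n|)
    (if dcadj (enum_val i) (enum_val j)
     then Num.sqrt ((dcdeg (enum_val i))%:R ^+ 2 + (dcdeg (enum_val j))%:R ^+ 2)
     else 0).

(* Main.v *)
Require Import Defs.
From mathcomp Require Import all_boot all_order all_algebra.
From mathcomp Require Import zify ring lra.
Import GRing.Theory Num.Theory.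
Set Implicit Arguments. Unset Strict Implicit. Unset Printing Implicit Defensive.
Import Order.TTheory.


Lemma modn_cases d a : 0 < d -> a < 3 * d ->
  (a %% d = a /\ a < d) \/ (a %% d = a - d /\ d <= a < 2 * d)
  \/ (a %% d = a - 2 * d /\ 2 * d <= a).
Proof.
move=> d0 a3.
case: (ltnP a d) => h1; first by left; rewrite modn_small.
case: (ltnP a (2 * d)) => h2.
  right; left; split; last by apply/andP.
  have -> : a = 1 * d + (a - d) by lia.
  by rewrite modnMDl modn_small //; lia.
right; right; split => //.
have -> : a = 2 * d + (a - 2 * d) by lia.
by rewrite modnMDl modn_small //; lia.
Qed.

Lemma odd_mod2 a : odd a = (a %% 2 == 1).
Proof. by rewrite modn2; case: (odd a). Qed.

Ltac kill_mod d hd :=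
  repeat match goal with
  | |- context [?a %% d] =>
      move: (@modn_cases d a hd ltac:(lia)); generalize (a %% d);
      let r := fresh "r" in let E := fresh "E" in
      intros r E; case: E => [[-> ?]|[[-> ?]|[-> ?]]]
  end.

Definition isZ n (i : nat) := (i == 0) || (i == n).

Definition qv n (g : Qelt n) : nat := nat_of_ord g.1.

Lemma qmul_fst n (i k : 'I_(n.*2)) j l :
  qv (qmul (i, j) (k, l)) =
  (i + (if j then n.*2 - k else k) + (if j && l then n else 0)) %% n.*2.
Proof. by []. Qed.

Lemma qmul_snd n (g h : Qelt n) : (qmul g h).2 = xorb g.2 h.2.
Proof. by case: g => i j; case: h => k l. Qed.

Lemma qmul_eqP n (g h x y : Qelt n) :
  qmul g h = qmul x y -> qv (qmul g h) = qv (qmul x y) /\ xorb g.2 h.2 = xorb x.2 y.2.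
Proof. by move=> E; rewrite E -!qmul_snd E. Qed.

Lemma conj_snd n (g h : Qelt n) : qconj g h -> g.2 = h.2.
Proof.
move=> /existsP [x /eqP /qmul_eqP [_]].
by case: g.2; case: h.2; case: x.2.
Qed.

Lemma conj_rot n (i k : 'I_(n.*2)) : (1 < n) ->
  qconj (i, false) (k, false) -> isZ n i = isZ n k.
Proof.
move=> hn /existsP [[t l] /eqP /qmul_eqP [E _]].
move: E; rewrite !qmul_fst /=.
have hd : 0 < n.*2 by lia.
have := ltn_ord i; have := ltn_ord k; have := ltn_ord t.
move=> ht hk hi.
case: l => /=; rewrite ?addn0;
kill_mod (n.*2) hd; move=> *; rewrite /isZ; lia.
Qed.

Lemma qeq n (u v : Qelt n) : qv u = qv v -> u.2 = v.2 -> u = v.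
Proof. by case: u => i j; case: v => k l /= E ->; congr (_, _); apply: val_inj. Qed.

Lemma qmul_eqI n (g h x y : Qelt n) :
  qv (qmul g h) = qv (qmul x y) -> xorb g.2 h.2 = xorb x.2 y.2 -> qmul g h = qmul x y.
Proof. by move=> E1 E2; apply: qeq => //; rewrite !qmul_snd. Qed.

Lemma conj_refl n (g : Qelt n) : 0 < n -> qconj g g.
Proof.
move=> hn; have h0 : 0 < n.*2 by lia.
apply/existsP; exists (Ordinal h0, false); apply/eqP.
case: g => i j; apply: qmul_eqI; last by case: j.
rewrite !qmul_fst /=; case: j => /=; rewrite ?addn0 ?subn0 ?add0n //.
have := ltn_ord i => hi.
kill_mod (n.*2) h0; lia.
Qed.

Lemma conj_refl_par n (i k : 'I_(n.*2)) : 0 < n -> odd i = odd k ->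
  qconj (i, true) (k, true).
Proof.
move=> hn hp; have hd : 0 < n.*2 by lia.
have hi := ltn_ord i; have hk := ltn_ord k.
have hp2 : i %% 2 = k %% 2 by rewrite !modn2 hp.
have [t [ht ht2]] : exists t, t < n.*2 /\ (if k <= i then i = k + 2 * t :> nat else i + n.*2 = k + 2 * t).
  exists ((if k <= i then i - k else i + n.*2 - k) %/ 2).
  by case: ifP => ?; lia.
apply/existsP; exists (Ordinal ht, false); apply/eqP.
apply: qmul_eqI => //.
rewrite !qmul_fst /= ?addn0.
move: ht2; case: ifP => ? ?; kill_mod (n.*2) hd; lia.
Qed.

Lemma conj_par n (i k : 'I_(n.*2)) : 0 < n ->
  qconj (i, true) (k, true) -> odd i = odd k.
Proof.
move=> hn /existsP [[t l] /eqP /qmul_eqP [E _]].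
move: E; rewrite !qmul_fst /=.
have hd : 0 < n.*2 by lia.
have := ltn_ord i; have := ltn_ord k; have := ltn_ord t.
move=> ht hk hi.
rewrite !odd_mod2.
case: l => /=; rewrite ?addn0;
kill_mod (n.*2) hd; move=> *; lia.
Qed.

Lemma comm_rot_ref n (i k : 'I_(n.*2)) : 0 < n ->
  qmul (i, false) (k, true) = qmul (k, true) (i, false) -> isZ n i.
Proof.
move=> hn /qmul_eqP [E _]; move: E; rewrite !qmul_fst /=.
have hd : 0 < n.*2 by lia.
have := ltn_ord i; have := ltn_ord k.
move=> hk hi; rewrite ?addn0 /isZ.
kill_mod (n.*2) hd; move=> *; lia.
Qed.

Lemma comm_ref_ref n (i k : 'I_(n.*2)) : 0 < n -> ~~ odd n ->
  qmul (i, true) (k, true) = qmul (k, true) (i, true) -> odd i = odd k.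
Proof.
move=> hn hno /qmul_eqP [E _]; move: E; rewrite !qmul_fst /=.
have hd : 0 < n.*2 by lia.
have := ltn_ord i; have := ltn_ord k.
move=> hk hi; move: hno; rewrite !odd_mod2.
kill_mod (n.*2) hd; move=> *; lia.
Qed.

Lemma comm_rot_rot n (i k : 'I_(n.*2)) :
  qmul (i, false) (k, false) = qmul (k, false) (i, false).
Proof. by apply: qmul_eqI => //; rewrite !qmul_fst /= ?addn0 addnC. Qed.

Lemma comm_Z n (i : 'I_(n.*2)) (h : Qelt n) : 0 < n -> isZ n i ->
  qmul (i, false) h = qmul h (i, false).
Proof.
move=> hn hz; case: h => k l; apply: qmul_eqI; last by case: l.
rewrite !qmul_fst /=.
have hd : 0 < n.*2 by lia.
have := ltn_ord i; have := ltn_ord k.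
move=> hk hi; move: hz; rewrite /isZ.
case: l; rewrite /= ?addn0; kill_mod (n.*2) hd; move=> *; lia.
Qed.

Lemma ref_partner n (i k : 'I_(n.*2)) : 0 < n -> odd n -> odd k != odd i ->
  exists k' : 'I_(n.*2), [/\ odd k' = odd k, k' != i &
     qmul (i, true) (k', true) = qmul (k', true) (i, true)].
Proof.
move=> hn hno hp; have hd : 0 < n.*2 by lia.
have hi := ltn_ord i; have hk := ltn_ord k.
exists (Ordinal (ltn_pmod (i + n) hd)); split.
- move: hno hp; rewrite /= !odd_mod2.
  kill_mod (n.*2) hd; move=> *; lia.
- apply/eqP => /(congr1 val) /=.
  kill_mod (n.*2) hd; move=> *; lia.
- apply: qmul_eqI => //; rewrite !qmul_fst /=.
  have -> : (i + n) %% n.*2 = (if i < n then i + n else i - n).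
    by kill_mod (n.*2) hd; case: ifP => ?; lia.
  case: ifP => ?; kill_mod (n.*2) hd; lia.
Qed.

Definition part n (g : Qelt n) : nat :=
  if g.2 then (if odd g.1 then 3 else 2) else (if isZ n g.1 then 0 else 1).

Definition compat n (q r : nat) : bool :=
  ~~ ((q == 1) && (2 <= r)) && ~~ ((r == 1) && (2 <= q))
  && (odd n || ~~ [&& 2 <= q, 2 <= r & q != r]).

Lemma dcadjE n (g h : Qelt n) : 1 < n ->
  dcadj g h = (g != h) && compat n (part g) (part h).
Proof.
move=> hn; have hn0 : 0 < n by lia.
rewrite /dcadj; case: (eqVneq g h) => //= neq.
move: neq; case: g => i j; case: h => k l neq.
move: neq; case: j; case: l => neq; rewrite /part /=.
-
  case: (eqVneq (odd i) (odd k)) => hp.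
  + rewrite hp; case: (odd k); rewrite /compat /= orbT;
    by apply/orP; left; apply: conj_refl_par.
  + have -> : compat n (if odd i then 3 else 2) (if odd k then 3 else 2) = odd n.
      by move: hp; rewrite /compat; case: (odd i); case: (odd k); rewrite //= orbF.
    case: (boolP (odd n)) => hno.
    * apply/orP; right.
      have hp' : odd k != odd i by rewrite eq_sym.
      have [k' [hk' nk' cm]] := ref_partner hn0 hno hp'.
      apply/existsP; exists (i, true); apply/existsP; exists (k', true).
      have c2 : qconj (k, true) (k', true) by apply: conj_refl_par => //; rewrite hk'.
      rewrite conj_refl // c2 cm eqxx andbT /=.
      apply/negP => /eqP [] /eqP; rewrite eq_sym; by apply/negP.
    * apply/negbTE; rewrite negb_or; apply/andP; split.
        by apply/negP => /(conj_par hn0); apply/eqP.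
      apply/existsP => [[[i' j'] /existsP [[k' l'] /and4P [c1 c2 _ /eqP cm]]]].
      have ej := conj_snd c1; have el := conj_snd c2; simpl in ej, el; subst j' l'.
      move: (conj_par hn0 c1) (conj_par hn0 c2) (comm_ref_ref hn0 hno cm).
      by move=> e1 e2 e3; move: hp; rewrite e1 e2 e3 eqxx.
-
  have -> : compat n (if odd i then 3 else 2) (if isZ n k then 0 else 1) = isZ n k.
    by rewrite /compat; case: ifP => h1; case: ifP => h2; rewrite ?h1 ?h2 /= ?orbT.
  case: (boolP (isZ n k)) => hz.
  + apply/orP; right; apply/existsP; exists (i, true); apply/existsP; exists (k, false).
    by rewrite !conj_refl // neq (comm_Z (i, true) hn0 hz) eqxx.
  + apply/negbTE; rewrite negb_or; apply/andP; split.
      by apply/negP => /conj_snd.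
    apply/existsP => [[[i' j'] /existsP [[k' l'] /and4P [c1 c2 _ /eqP cm]]]].
    have ej := conj_snd c1; have el := conj_snd c2; simpl in ej, el; subst j' l'.
    have := conj_rot hn c2; move: hz => /negPf -> /esym.
    by rewrite (comm_rot_ref hn0 (esym cm)).
-
  have -> : compat n (if isZ n i then 0 else 1) (if odd k then 3 else 2) = isZ n i.
    by rewrite /compat; case: ifP => h1; case: ifP => h2; rewrite ?h1 ?h2 /= ?orbT.
  case: (boolP (isZ n i)) => hz.
  + apply/orP; right; apply/existsP; exists (i, false); apply/existsP; exists (k, true).
    by rewrite !conj_refl // neq (comm_Z (k, true) hn0 hz) eqxx.
  + apply/negbTE; rewrite negb_or; apply/andP; split.
      by apply/negP => /conj_snd.
    apply/existsP => [[[i' j'] /existsP [[k' l'] /and4P [c1 c2 _ /eqP cm]]]].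
    have ej := conj_snd c1; have el := conj_snd c2; simpl in ej, el; subst j' l'.
    have := conj_rot hn c1; move: hz => /negPf -> /esym.
    by rewrite (comm_rot_ref hn0 cm).
-
  have -> : compat n (if isZ n i then 0 else 1) (if isZ n k then 0 else 1) = true.
    by rewrite /compat; case: ifP => h1; case: ifP => h2; rewrite ?h1 ?h2 /= ?orbT.
  apply/orP; right; apply/existsP; exists (i, false); apply/existsP; exists (k, false).
  by rewrite !conj_refl // neq comm_rot_rot eqxx.
Qed.



Lemma card_sumb (T : finType) (P : pred T) : #|[pred x | P x]| = \sum_x (P x : nat).
Proof.
rewrite -sum1_card [LHS]big_mkcond /=. apply: eq_bigr => x _. by rewrite inE; case: (P x).
Qed.

Lemma sum_Q n (F : 'I_(n.*2) -> bool -> nat) :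
  \sum_(x : Qelt n) F x.1 x.2 = \sum_(i < n.*2) (F i true + F i false).
Proof. by rewrite -pair_bigA; apply: eq_bigr => i _; rewrite big_bool. Qed.

Lemma sum_odd m : \sum_(i < m.*2) odd i = m.
Proof.
rewrite -(big_mkord xpredT (fun i => nat_of_bool (odd i))).
elim: m => [|m IH]; first by rewrite big_nil.
by rewrite doubleS !big_nat_recr //= IH odd_double /=; lia.
Qed.

Lemma sum_compl N (b : nat -> bool) :
  \sum_(i < N) (~~ b i : nat) = N - \sum_(i < N) (b i : nat).
Proof.
have : \sum_(i < N) ((~~ b i : nat) + b i) = N.
  by under eq_bigr do rewrite addn_negb; rewrite sum1_card card_ord.
rewrite big_split /= => E; lia.
Qed.

Lemma sum_eq1 N c : c < N -> \sum_(i < N) (i == c :> nat) = 1.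
Proof.
move=> hc; rewrite (bigD1 (Ordinal hc)) //= eqxx big1 // => j.
by rewrite -val_eqE /= => /negPf ->.
Qed.

Lemma sum_isZ n : 0 < n -> \sum_(i < n.*2) isZ n i = 2.
Proof.
move=> hn; rewrite /isZ.
have -> : \sum_(i < n.*2) ((nat_of_ord i == 0) || (nat_of_ord i == n) : nat)
        = \sum_(i < n.*2) ((nat_of_ord i == 0) + (nat_of_ord i == n)).
  apply: eq_bigr => i _; case: (eqVneq (nat_of_ord i) 0) => [->|] /=.
    by rewrite eq_sym; case: (0 == n) => //; lia.
  by [].
by rewrite big_split /= !sum_eq1 //; lia.
Qed.

Definition mc n (q : nat) : nat := if q == 0 then 2 else if q == 1 then n.*2 - 2 else n.

Lemma card_part n q : 0 < n -> q < 4 -> \sum_(x : Qelt n) (part x == q : nat) = mc n q.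
Proof.
move=> hn hq.
transitivity (\sum_(i < n.*2) ((part (i, true) == q : nat) + (part (i, false) == q))).
  rewrite -(sum_Q (fun i b => (part (i, b) == q : nat))).
  by apply: eq_bigr => [[i b]].
rewrite /part /=.
case: q hq => [|[|[|[|q]]]] // _; rewrite /mc /=.
- transitivity (\sum_(i < n.*2) (isZ n i : nat)); last exact: sum_isZ.
  by apply: eq_bigr => i _; case: (odd i); case: (isZ n i).
- transitivity (\sum_(i < n.*2) (~~ isZ n i : nat)).
    by apply: eq_bigr => i _; case: (odd i); case: (isZ n i).
  by rewrite (sum_compl _ (isZ n)) sum_isZ.
- transitivity (\sum_(i < n.*2) (~~ odd i : nat)).
    by apply: eq_bigr => i _; case: (odd i); case: (isZ n i).
  by rewrite (sum_compl _ odd) sum_odd; lia.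
- transitivity (\sum_(i < n.*2) (odd i : nat)).
    by apply: eq_bigr => i _; case: (odd i); case: (isZ n i).
  by rewrite sum_odd.
Qed.

Definition dv n (q : nat) : nat := (\sum_(r < 4) compat n q r * mc n r) - 1.

Lemma compat_refl n q : compat n q q.
Proof. rewrite /compat eqxx /= !andbF /= orbT andbb andbT; by case: q => [|[|]]. Qed.

Lemma part_lt4 n (g : Qelt n) : part g < 4.
Proof. by rewrite /part; case: g.2; case: ifP. Qed.

Lemma sum_part n (F : nat -> nat) : 0 < n ->
  \sum_(h : Qelt n) F (part h) = \sum_(r < 4) F r * mc n r.
Proof.
move=> hn.
transitivity (\sum_(h : Qelt n) \sum_(r < 4) (part h == r) * F r).
  apply: eq_bigr => h _.
  rewrite (bigD1 (Ordinal (part_lt4 h))) //= eqxx mul1n big1 ?addn0 // => r.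
  by rewrite -val_eqE /= eq_sym => /negPf ->.
rewrite exchange_big /=; apply: eq_bigr => r _.
by rewrite -big_distrl /= card_part // mulnC.
Qed.

Lemma dcdegE n (g : Qelt n) : 1 < n -> dcdeg g = dv n (part g).
Proof.
move=> hn; have hn0 : 0 < n by lia.
rewrite /dcdeg /dv -(sum_part (fun r => compat n (part g) r)) //.
rewrite (bigD1 g) //= compat_refl.
rewrite -sum1dep_card big_mkcond /=.
rewrite add1n subSS subn0 [RHS]big_mkcond /=; apply: eq_bigr => h _.
rewrite dcadjE // eq_sym.
by case: (h != g); case: (compat _ _ _).
Qed.

Local Open Scope ring_scope.

Lemma sylvester (R : comNzRingType) (p q : nat) (A : 'M[R]_(p, q)) (B : 'M[R]_(q, p)) :
  \det (1%:M - A *m B) = \det (1%:M - B *m A).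
Proof.
have E1 : block_mx 1%:M A B 1%:M =
  block_mx 1%:M 0 B 1%:M *m block_mx 1%:M A 0 (1%:M - B *m A).
  by rewrite mulmx_block !mulmx1 !mul1mx ?mulmx0 ?mul0mx ?addr0 ?add0r addrC subrK.
have E2 : block_mx 1%:M A B 1%:M =
  block_mx (1%:M - A *m B) A 0 1%:M *m block_mx 1%:M 0 B 1%:M.
  by rewrite mulmx_block !mulmx1 !mul1mx ?mulmx0 ?mul0mx ?addr0 ?add0r subrK.
have := congr1 determinant E1; rewrite {1}E2 !det_mulmx.
by rewrite !det_lblock !det_ublock !det1 !mul1r ?mulr1 => ->.
Qed.

Lemma char_poly_horner (R : comNzRingType) (N : nat) (A : 'M[R]_N) (x : R) :
  (char_poly A).[x] = \det (x%:M - A).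
Proof.
rewrite /char_poly -[(_).[x]]/(horner_eval x _) -det_map_mx; congr (\det _).
apply/matrixP => i j; rewrite !mxE /=.
by rewrite horner_evalE hornerD hornerN hornerMn hornerX hornerC.
Qed.

Lemma poly_eq_pos (R : realFieldType) (p q : {poly R}) :
  (forall x : R, 0 < x -> p.[x] = q.[x]) -> p = q.
Proof.
move=> H; apply/eqP; rewrite -subr_eq0; apply/eqP.
apply: (@roots_geq_poly_eq0 _ _ [seq (i.+1)%:R | i <- iota 0 (size (p - q))]).
- apply/allP => y /mapP [i _ ->].
  by rewrite /root hornerD hornerN H ?subrr // ltr0Sn.
- rewrite map_inj_uniq ?iota_uniq // => i j /eqP; rewrite eqr_nat eqSS => /eqP.
  done.
- by rewrite size_map size_iota.
Qed.


Lemma sum_indic (R : nzRingType) (k : nat) (a : 'I_k) (F : 'I_k -> R) :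
  \sum_q (a == q)%:R * F q = F a.
Proof.
rewrite (bigD1 a) //= eqxx mul1r big1 ?addr0 // => q /negPf.
by rewrite eq_sym => ->; rewrite mul0r.
Qed.

Lemma sum_indic_r (R : nzRingType) (k : nat) (a : 'I_k) (F : 'I_k -> R) :
  \sum_q F q * (a == q)%:R = F a.
Proof.
rewrite (bigD1 a) //= eqxx mulr1 big1 ?addr0 // => q /negPf.
by rewrite eq_sym => ->; rewrite mulr0.
Qed.

Lemma diag_mul_entry (R : nzRingType) m n (d : 'rV[R]_m) (A : 'M[R]_(m, n)) i j :
  (diag_mx d *m A) i j = d 0 i * A i j.
Proof. by rewrite mul_diag_mx mxE. Qed.

Lemma blowup (R : fieldType) (N k : nat) (p : 'I_N -> 'I_k) (W : 'M[R]_k) (x : R) :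
  (forall q, x + W q q != 0) ->
  \det (x%:M - \matrix_(i, j) (if i == j then 0 else W (p i) (p j)))
    * \prod_q (x + W q q)
  = \prod_q (x + W q q) ^+ #|[pred i | p i == q]|
    * \det (x%:M - \matrix_(q, r) ((#|[pred i | p i == r]|)%:R * W q r
                                  - (q == r)%:R * W q q)).
Proof.
move=> nz.
set M := \matrix_(i, j) _.
pose c q := x + W q q.
pose m q := #|[pred i | p i == q]|.
pose E : 'M[R]_(N, k) := \matrix_(i, q) (p i == q)%:R.
pose L := diag_mx (\row_i c (p i)).
pose Li := diag_mx (\row_i (c (p i))^-1).
have EW : forall i r, (E *m W) i r = W (p i) r.
  by move=> i r; rewrite mxE; under eq_bigr do rewrite mxE; rewrite sum_indic.
have EWE : forall i j, (E *m W *m E^T) i j = W (p i) (p j).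
  move=> i j; rewrite mxE; under eq_bigr do rewrite EW !mxE.
  by rewrite sum_indic_r.
have step1 : x%:M - M = L *m (1%:M - (Li *m E) *m (W *m E^T)).
  have -> : Li *m E *m (W *m E^T) = Li *m (E *m W *m E^T) by rewrite !mulmxA.
  apply/matrixP => i j; rewrite diag_mul_entry.
  have LiZ : forall (Z : 'M[R]_N) i j, \sum_j0 Li i j0 * Z j0 j = (c (p i))^-1 * Z i j.
    by move=> Z i' j'; have := diag_mul_entry (\row_i (c (p i))^-1) Z i' j'; rewrite mxE [_ 0 i']mxE.
  rewrite !mxE LiZ EWE mulrBr mulrA mulfV ?nz // mul1r.
  case: eqP => [->|_]; last by rewrite mulr0 add0r.
  by rewrite mulr1 mulr1n subr0 /c addrK.
pose D : 'M[R]_k := \matrix_(q, r) ((q == r)%:R * (m r)%:R * (c r)^-1).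
have ELE : E^T *m (Li *m E) = D.
  apply/matrixP => q r; rewrite mul_diag_mx !mxE.
  under eq_bigr do rewrite !mxE.
  case: (eqVneq q r) => [<-|nqr]; last first.
    rewrite mul0r mul0r big1 // => i _.
    case: (eqVneq (p i) q) => [->|]; last by rewrite mul0r.
    by rewrite (negPf nqr) !mulr0.
  rewrite mul1r.
  transitivity (\sum_(i | p i == q) (c q)^-1).
    rewrite [RHS]big_mkcond /=; apply: eq_bigr => i _.
    by case: eqP => [->|]; rewrite ?mul1r ?mulr1 ?mul0r.
  by rewrite sumr_const mulr_natl.
rewrite step1 det_mulmx sylvester.
have -> : W *m E^T *m (Li *m E) = W *m D by rewrite -mulmxA ELE.
have -> : \det L = \prod_q (x + W q q) ^+ #|[pred i | p i == q]|.
  rewrite det_diag.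
  under eq_bigr do rewrite mxE.
  rewrite (partition_big p xpredT) //=.
  apply: eq_bigr => q _.
  transitivity (\prod_(i | p i == q) c q).
    by apply: eq_bigr => i /eqP ->.
  by rewrite prodr_const.
rewrite -mulrA; congr (_ * _).
have -> : \prod_q (x + W q q) = \det (diag_mx (\row_q c q)).
  by rewrite det_diag; apply: eq_bigr => q _; rewrite mxE.
rewrite -det_mulmx; congr (\det _).
apply/matrixP => q r; rewrite mul_mx_diag !mxE.
rewrite (bigD1 r) //= big1 => [|s /negPf nsr]; last by rewrite !mxE nsr !mul0r mulr0.
rewrite !mxE eqxx mul1r addr0 mulrBl -!mulrA mulVf ?nz // mulr1.
case: eqP => [->|_]; first by rewrite mul1r mulr1n /c /m mul1r mulrC opprB addrA addrAC.
by rewrite /= mul0r mulr0n mul0r subr0 sub0r sub0r mulrC.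
Qed.


Lemma minor_mx (R : comNzRingType) n (F : nat -> nat -> R) (i : 'I_n.+1) :
  row' i (col' ord0 (\matrix_(i < n.+1, j < n.+1) F i j))
  = \matrix_(j < n, k < n) F (bump i j) (bump 0 k).
Proof. by apply/matrixP => j k; rewrite !mxE. Qed.

Definition Fsub (R : Type) (F : nat -> nat -> R) (i : nat) a b := F (bump i a) (bump 0 b).

Lemma det_expand0 (R : comNzRingType) n (F : nat -> nat -> R) :
  \det (\matrix_(i < n.+1, j < n.+1) F i j) =
  \sum_(i < n.+1) F i 0%N * ((-1) ^+ i * \det (\matrix_(j < n, k < n) Fsub F i j k)).
Proof.
rewrite (expand_det_col _ ord0); apply: eq_bigr => i _.
by rewrite /cofactor minor_mx !mxE addn0.
Qed.

Lemma det2 (R : comNzRingType) (F : nat -> nat -> R) :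
  \det (\matrix_(i < 2, j < 2) F i j) = F 0%N 0%N * F 1%N 1%N - F 0%N 1%N * F 1%N 0%N.
Proof.
rewrite det_expand0 !big_ord_recl big_ord0 !det_mx11 !mxE /Fsub /bump /=; ring.
Qed.

Lemma det3 (R : comNzRingType) (F : nat -> nat -> R) :
  \det (\matrix_(i < 3, j < 3) F i j) =
  F 0%N 0%N * (F 1%N 1%N * F 2%N 2%N - F 1%N 2%N * F 2%N 1%N)
  - F 1%N 0%N * (F 0%N 1%N * F 2%N 2%N - F 0%N 2%N * F 2%N 1%N)
  + F 2%N 0%N * (F 0%N 1%N * F 1%N 2%N - F 0%N 2%N * F 1%N 1%N).
Proof.
rewrite det_expand0 !big_ord_recl big_ord0 !det2 /Fsub /bump /=; ring.
Qed.

Lemma det4 (R : comNzRingType) (F : nat -> nat -> R) :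
  \det (\matrix_(i < 4, j < 4) F i j) =
  F 0%N 0%N * (F 1%N 1%N * (F 2%N 2%N * F 3%N 3%N - F 2%N 3%N * F 3%N 2%N)
          - F 2%N 1%N * (F 1%N 2%N * F 3%N 3%N - F 1%N 3%N * F 3%N 2%N)
          + F 3%N 1%N * (F 1%N 2%N * F 2%N 3%N - F 1%N 3%N * F 2%N 2%N))
  - F 1%N 0%N * (F 0%N 1%N * (F 2%N 2%N * F 3%N 3%N - F 2%N 3%N * F 3%N 2%N)
          - F 2%N 1%N * (F 0%N 2%N * F 3%N 3%N - F 0%N 3%N * F 3%N 2%N)
          + F 3%N 1%N * (F 0%N 2%N * F 2%N 3%N - F 0%N 3%N * F 2%N 2%N))
  + F 2%N 0%N * (F 0%N 1%N * (F 1%N 2%N * F 3%N 3%N - F 1%N 3%N * F 3%N 2%N)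
          - F 1%N 1%N * (F 0%N 2%N * F 3%N 3%N - F 0%N 3%N * F 3%N 2%N)
          + F 3%N 1%N * (F 0%N 2%N * F 1%N 3%N - F 0%N 3%N * F 1%N 2%N))
  - F 3%N 0%N * (F 0%N 1%N * (F 1%N 2%N * F 2%N 3%N - F 1%N 3%N * F 2%N 2%N)
          - F 1%N 1%N * (F 0%N 2%N * F 2%N 3%N - F 0%N 3%N * F 2%N 2%N)
          + F 2%N 1%N * (F 0%N 2%N * F 1%N 3%N - F 0%N 3%N * F 1%N 2%N)).
Proof.
rewrite det_expand0 !big_ord_recl big_ord0 !det3 /Fsub /bump /=; ring.
Qed.

Lemma det4_sp (R : comNzRingType) (F : nat -> nat -> R) :
  F 1%N 2%N = 0 -> F 1%N 3%N = 0 -> F 2%N 1%N = 0 -> F 3%N 1%N = 0 ->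
  \det (\matrix_(i < 4, j < 4) F i j) =
  (F 0%N 0%N * F 1%N 1%N - F 0%N 1%N * F 1%N 0%N) * (F 2%N 2%N * F 3%N 3%N - F 2%N 3%N * F 3%N 2%N)
  - F 1%N 1%N * (F 0%N 2%N * F 2%N 0%N * F 3%N 3%N - F 0%N 2%N * F 3%N 0%N * F 2%N 3%N
             + F 0%N 3%N * F 3%N 0%N * F 2%N 2%N - F 0%N 3%N * F 2%N 0%N * F 3%N 2%N).
Proof. by move=> h1 h2 h3 h4; rewrite det4 h1 h2 h3 h4; ring. Qed.


Lemma dv_vals n : (1 < n)%N ->
  [/\ dv n 0 = (4 * n - 1)%N, dv n 1 = (2 * n - 1)%N,
      dv n 2 = (if odd n then 2 * n + 1 else n + 1)%N &
      dv n 3 = (if odd n then 2 * n + 1 else n + 1)%N].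
Proof.
move=> hn; rewrite /dv !big_ord_recr big_ord0 /= /compat /mc /=.
rewrite !big_ord0; by case: (odd n) => /=; split; lia.
Qed.

Definition pp n (i : 'I_#|Qelt n|) : 'I_4 := Ordinal (part_lt4 (enum_val i)).

Definition Wf (R : rcfType) n (q r : nat) : R :=
  if compat n q r then Num.sqrt ((dv n q)%:R ^+ 2 + (dv n r)%:R ^+ 2) else 0.

Definition WM (R : rcfType) n : 'M[R]_4 := \matrix_(q, r) Wf R n q r.

Lemma sombor_blow (R : rcfType) n : (1 < n)%N ->
  sombor_mx R n = \matrix_(i, j) (if i == j then 0 else WM R n (pp i) (pp j)).
Proof.
move=> hn; apply/matrixP => i j; rewrite !mxE dcadjE // !dcdegE //.
rewrite (inj_eq enum_val_inj).
by case: (i == j) => //=; rewrite /Wf; case: (compat _ _ _).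
Qed.

Lemma mcount n (q : 'I_4) : (0 < n)%N ->
  #|[pred i : 'I_#|Qelt n| | pp i == q]| = mc n q.
Proof.
move=> hn; rewrite card_sumb -card_part ?ltn_ord //.
rewrite -(big_enum_val (A := Qelt n) (fun x => (part x == q : nat))) /=.
apply: eq_bigr => i _. by [].
Qed.

Definition Gm (R : rcfType) n (x : R) (q r : nat) : R :=
  if q == r then x - ((mc n q)%:R - 1) * Wf R n q q else - ((mc n r)%:R * Wf R n q r).

Lemma Wf_ge0 (R : rcfType) n q r : 0 <= Wf R n q r.
Proof. by rewrite /Wf; case: (compat _ _ _) => //; exact: sqrtr_ge0. Qed.

Lemma point (R : rcfType) n (x : R) : (1 < n)%N -> 0 < x ->
  (char_poly (sombor_mx R n)).[x] * \prod_(q < 4) (x + Wf R n q q)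
   = \prod_(q < 4) (x + Wf R n q q) ^+ mc n q
     * \det (\matrix_(q < 4, r < 4) Gm n x q r).
Proof.
move=> hn hx; have hn0 : (0 < n)%N by lia.
rewrite char_poly_horner sombor_blow //.
have nz : forall q, x + WM R n q q != 0.
  move=> q; rewrite mxE; have := Wf_ge0 R n q q => h.
  by apply: lt0r_neq0; lra.
have E := @blowup R _ _ (@pp n) (WM R n) x nz.
have P1 : \prod_(q < 4) (x + WM R n q q) = \prod_(q < 4) (x + Wf R n q q).
  by apply: eq_bigr => q _; rewrite mxE.
have P2 : \prod_(q < 4) (x + WM R n q q) ^+ #|[pred i : 'I_#|Qelt n| | pp i == q]|
          = \prod_(q < 4) (x + Wf R n q q) ^+ mc n q.
  by apply: eq_bigr => q _; rewrite mxE mcount.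
have P3 : x%:M - \matrix_(q, r) ((#|[pred i | @pp n i == r]|)%:R * WM R n q r
                                  - (q == r)%:R * WM R n q q)
          = \matrix_(q < 4, r < 4) Gm n x q r.
  apply/matrixP => q r; rewrite !mxE mcount // /Gm.
  case: (eqVneq q r) => [->|nqr]; first by rewrite !eqxx mulr1n mul1r; ring.
  rewrite val_eqE (negPf nqr) mulr0n mul0r subr0 sub0r //.
by rewrite P1 P2 P3 in E.
Qed.

Lemma Wf_diag (R : rcfType) n q r : compat n q r -> dv n q = dv n r ->
  Wf R n q r = (dv n q)%:R * Num.sqrt 2.
Proof.
move=> hc hd; rewrite /Wf hc hd.
have -> : (dv n r)%:R ^+ 2 + (dv n r)%:R ^+ 2 = (2 : R) * (dv n r)%:R ^+ 2 by ring.
by rewrite sqrtrM ?ler0n // sqrtr_sqr ger0_norm ?ler0n // mulrC.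
Qed.

Lemma Gprod (R : rcfType) n (x : R) q r q' r' :
  q != r -> q' != r' -> compat n q r -> compat n q' r' ->
  (dv n q' ^ 2 + dv n r' ^ 2 = dv n q ^ 2 + dv n r ^ 2)%N ->
  Gm n x q r * Gm n x q' r'
  = (mc n r * mc n r')%:R * ((dv n q ^ 2 + dv n r ^ 2)%N)%:R.
Proof.
move=> h1 h2 c1 c2 hd; rewrite /Gm (negPf h1) (negPf h2) /Wf c1 c2.
rewrite -!natrX -!natrD hd mulrNN mulrACA -expr2 sqr_sqrtr ?ler0n //.
by rewrite natrM.
Qed.

Lemma prod_nz (R : rcfType) n (x : R) : 0 < x -> \prod_(q < 4) (x + Wf R n q q) != 0.
Proof.
move=> hx; rewrite prodf_seq_neq0; apply/allP => q _ /=.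
have := Wf_ge0 R n q q => h; apply: lt0r_neq0; lra.
Qed.

Unset Implicit Arguments.

Theorem corollary4p8 (R : rcfType) (n : nat) (hn : (2 <= n)%N) :
  let s : R := Num.sqrt 2 in
  let c (m : nat) : {poly R} := (m%:R * s)%:P in
  (odd n ->
     char_poly (sombor_mx R n) =
       ('X + c (4 * n - 1)%N) * ('X + c (2 * n - 1)%N) ^+ (2 * n - 3)
       * ('X + c (2 * n + 1)%N) ^+ (2 * n - 1)
       * (('X - c (4 * n - 1)%N) * ('X - c ((2 * n - 1) * (2 * n - 3))%N)
            * ('X - c ((2 * n - 1) * (2 * n + 1))%N)
          - (8 * (n - 1) * (10 * n ^ 2 - 6 * n + 1))%:R%:P
            * ('X - c ((2 * n - 1) * (2 * n + 1))%N)
          - (8 * n * (10 * n ^ 2 - 2 * n + 1))%:R%:P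
            * ('X - c ((2 * n - 1) * (2 * n - 3))%N)))
  /\
  (~~ odd n ->
     char_poly (sombor_mx R n) =
       ('X + c (4 * n - 1)%N) * ('X + c (2 * n - 1)%N) ^+ (2 * n - 3)
       * ('X + c (n + 1)%N) ^+ (2 * n - 2)
       * (('X - c (4 * n - 1)%N) * ('X - c ((n - 1) * (n + 1))%N) ^+ 2
            * ('X - c ((2 * n - 1) * (2 * n - 3))%N)
          - (8 * (n - 1) * (10 * n ^ 2 - 6 * n + 1))%:R%:P
            * ('X - c ((n - 1) * (n + 1))%N) ^+ 2
          - (4 * n * (17 * n ^ 2 - 6 * n + 2))%:R%:P
            * ('X - c ((2 * n - 3) * (2 * n - 1))%N)
            * ('X - c ((n - 1) * (n + 1))%N))).
Proof.
move=> s c.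
case: (dv_vals hn) => d0 d1 d2 d3.
have c0 : forall q, compat n 0 q by move=> q; rewrite /compat /= andbF /= orbT.
have c01 : compat n 1 0 by rewrite /compat /= orbT.
have c20 : compat n 2 0 by rewrite /compat /= orbT.
have c30 : compat n 3 0 by rewrite /compat /= orbT.
have cqq : forall q, compat n q q by move=> q; exact: compat_refl.
have z1 : forall x : R, Gm n x 1 2 = 0 by move=> x; rewrite /Gm /= /Wf /compat /= mulr0 oppr0.
have z2 : forall x : R, Gm n x 1 3 = 0 by move=> x; rewrite /Gm /= /Wf /compat /= mulr0 oppr0.
have z3 : forall x : R, Gm n x 2 1 = 0 by move=> x; rewrite /Gm /= /Wf /compat /= mulr0 oppr0.
have z4 : forall x : R, Gm n x 3 1 = 0 by move=> x; rewrite /Gm /= /Wf /compat /= mulr0 oppr0.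
have [m em] : exists m, n = m.+2 by exists (n - 2)%N; lia.
split => hpar; apply: poly_eq_pos => x hx; apply: (mulIf (prod_nz n hx)); rewrite point //.
- rewrite !hornerE det4_sp //.
  have c23 : compat n 2 3 by rewrite /compat /= hpar.
  have c32 : compat n 3 2 by rewrite /compat /= hpar.
  rewrite (@Gprod R n x 0 1 1 0) //; last by rewrite addnC.
  rewrite (@Gprod R n x 0 2 2 0) //; last by rewrite addnC.
  rewrite (@Gprod R n x 0 2 3 0) //; last by rewrite d2 d3 addnC.
  rewrite (@Gprod R n x 0 3 3 0) //; last by rewrite addnC.
  rewrite (@Gprod R n x 0 3 2 0) //; last by rewrite d2 d3 addnC.
  rewrite /Gm /= !Wf_diag //; try by rewrite d2 d3.
  rewrite !big_ord_recr !big_ord0 /= !Wf_diag //.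
  rewrite /mc /= d0 d1 d2 d3 hpar /s.
  subst n.
  have -> : (4 * m.+2 - 1 = 4 * m + 7)%N by lia.
  have -> : (2 * m.+2 - 1 = 2 * m + 3)%N by lia.
  have -> : ((m.+2).*2 - 2 = 2 * m + 2)%N by lia.
  have -> : (2 * m.+2 - 3 = 2 * m + 1)%N by lia.
  have -> : (m.+2 - 1 = m + 1)%N by lia.
  have -> : (10 * m.+2 * m.+2 - 6 * m.+2 = 10 * m * m + 34 * m + 28)%N by nia.
  have -> : (10 * m.+2 * m.+2 - 2 * m.+2 = 10 * m * m + 38 * m + 36)%N by nia.
  set B := x + _ * Num.sqrt 2.
  set D := x + (2 * m + 3)%:R * _.
  set C := x + (2 * m.+2 + 1)%:R * _.
  rewrite (exprSr C m.+1).
  have -> : (2 * m + 3 = m.+1 + m.+2)%N by lia.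
  rewrite (exprD C) (exprSr C m.+1).
  have -> : (2 * m + 2 = (2 * m + 1).+1)%N by lia.
  rewrite (exprSr D (2 * m + 1)).
  rewrite /B /C /D; ring.
- rewrite !hornerE det4_sp //.
  have nc23 : compat n 2 3 = false by rewrite /compat /= (negPf hpar).
  have nc32 : compat n 3 2 = false by rewrite /compat /= (negPf hpar).
  have -> : Gm n x 2 3 = 0 by rewrite /Gm /= /Wf nc23 mulr0 oppr0.
  have -> : Gm n x 3 2 = 0 by rewrite /Gm /= /Wf nc32 mulr0 oppr0.
  rewrite (@Gprod R n x 0 1 1 0) //; last by rewrite addnC.
  rewrite (@Gprod R n x 0 2 2 0) //; last by rewrite addnC.
  rewrite (@Gprod R n x 0 2 3 0) //; last by rewrite d2 d3 addnC.
  rewrite (@Gprod R n x 0 3 3 0) //; last by rewrite addnC.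
  rewrite (@Gprod R n x 0 3 2 0) //; last by rewrite d2 d3 addnC.
  rewrite /Gm /= !Wf_diag //.
  rewrite !big_ord_recr !big_ord0 /= !Wf_diag //.
  rewrite /mc /= d0 d1 d2 d3 (negPf hpar) /s.
  subst n.
  have -> : (4 * m.+2 - 1 = 4 * m + 7)%N by lia.
  have -> : (2 * m.+2 - 1 = 2 * m + 3)%N by lia.
  have -> : ((m.+2).*2 - 2 = 2 * m + 2)%N by lia.
  have -> : (2 * m.+2 - 2 = 2 * m + 2)%N by lia.
  have -> : (2 * m.+2 - 3 = 2 * m + 1)%N by lia.
  have -> : (m.+2 - 1 = m + 1)%N by lia.
  have -> : (10 * m.+2 * m.+2 - 6 * m.+2 = 10 * m * m + 34 * m + 28)%N by nia.
  have -> : (17 * m.+2 * m.+2 - 6 * m.+2 = 17 * m * m + 62 * m + 56)%N by nia.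
  set B := x + _ * Num.sqrt 2.
  set D := x + (2 * m + 3)%:R * _.
  set C := x + (m.+2 + 1)%:R * _.
  rewrite (exprSr C m.+1).
  have -> : (2 * m + 2 = m.+1 + m.+1)%N by lia.
  rewrite (exprD C).
  have -> : (m.+1 + m.+1 = (2 * m + 1).+1)%N by lia.
  rewrite (exprSr D (2 * m + 1)).
  rewrite /B /C /D; ring.
Qed.
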